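(* Let $R:\mathbb{N}\to[0,1]$ satisfy $R(n)\to0$. Then there exist numbers $p_1,p_2,\ldots\ge0$ with $\sum_{k\ge1}p_k=1$, two strictly increasing sequences of positive integers $(n_i)_{i\ge1}$ and $(k_i)_{i\ge1}$, and a constant $C\in[\tfrac12,1]$ such that for all $i>1$: (a) $\sum_{k>k_i}p_k\le\frac{1}{n_i}$; (b) $n_ip_{k_i}\le k_i$; (c) $p_{k_i}=CR(n_i)$. *)

(* Defs.v *)
From Stdlib Require Import Reals.
From Coquelicot Require Export Coquelicot.
Open Scope R_scope.

(* Main.v *)
Require Import Defs.
From Stdlib Require Import Reals Lra Lia ClassicalEpsilon.
From Coquelicot Require Import Coquelicot.
Open Scope R_scope.

Lemma telesc (b : nat -> R) (L : R) : is_lim_seq b L ->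
  is_series (fun j => b j - b (S j)) (b O - L).
Proof.
  intros H.
  assert (E : forall n, sum_n (fun j => b j - b (S j)) n = b O - b (S n)).
  { induction n as [|n IH].
    - rewrite sum_O. reflexivity.
    - rewrite sum_Sn, IH. unfold plus; simpl. ring. }
  unfold is_series.
  change (is_lim_seq (sum_n (fun j => b j - b (S j))) (b O - L)).
  apply is_lim_seq_ext with (fun n => b O - b (S n)).
  { intros; rewrite E; reflexivity. }
  apply is_lim_seq_minus'. apply is_lim_seq_const.
  apply (is_lim_seq_incr_1 b L). exact H.
Qed.

Lemma geom_half : is_series (fun i => (1/2)^i) 2.
Proof.
  assert (H := is_series_geom (1/2) ltac:(rewrite Rabs_pos_eq; lra)).
  replace (/ (1 - 1/2)) with 2 in H by field. exact H.
Qed.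

Lemma geom_34 : is_series (fun i => (3/4)^i) 4.
Proof.
  assert (H := is_series_geom (3/4) ltac:(rewrite Rabs_pos_eq; lra)).
  replace (/ (1 - 3/4)) with 4 in H by field. exact H.
Qed.

Lemma exists_small (Rf : nat -> R) (Hlim : is_lim_seq Rf 0) (a : nat) (d : R) :
  0 < d -> exists N, (a < N)%nat /\ Rf N <= d.
Proof.
  intros Hd. apply is_lim_seq_spec in Hlim.
  destruct (Hlim (mkposreal d Hd)) as [N HN].
  exists (Nat.max N (S a)). split. lia.
  specialize (HN (Nat.max N (S a)) ltac:(lia)). simpl in HN.
  apply Rabs_lt_between in HN. lra.
Qed.

Lemma build_n (Rf : nat -> R) (Hlim : is_lim_seq Rf 0) :
  exists n : nat -> nat, n O = 1%nat /\ forall m,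
    (n m < n (S m))%nat /\ Rf (n (S m)) <= (1/2)^(S m) / INR (S (n m)).
Proof.
  assert (H : forall m a, exists N, (a < N)%nat /\ Rf N <= (1/2)^(S m) / INR (S a)).
  { intros m a. apply exists_small; auto.
    apply Rdiv_lt_0_compat. apply pow_lt; lra. apply lt_0_INR; lia. }
  exists (fix g i := match i with O => 1%nat | S m =>
            proj1_sig (constructive_indefinite_description _ (H m (g m))) end).
  split. reflexivity. intros m.
  destruct (constructive_indefinite_description _ _) as [N HN]. simpl. exact HN.
Qed.

Lemma geom_c (c : R) : is_series (fun i => c * (1/2)^i) (c * 2).
Proof. exact (is_series_scal_l c _ 2 geom_half). Qed.

Lemma ex_geom_c (c : R) : ex_series (fun i => c * (1/2)^i).
Proof. eexists; apply geom_c. Qed.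

Lemma ex_geom1 : ex_series (fun i => (1/2)^i).
Proof. eexists; apply geom_half. Qed.

Lemma Series_nonneg (a : nat -> R) : (forall i, 0 <= a i) -> ex_series a -> 0 <= Series a.
Proof.
  intros H Ha.
  assert (E : Series (fun i => 0 * (1/2)^i) = 0).
  { rewrite Series_scal_l. ring. }
  rewrite <- E. apply Series_le. intros i; split; [lra|]. rewrite Rmult_0_l. apply H.
  exact Ha.
Qed.

Definition qf (Rf : nat -> R) (n : nat -> nat) (i : nat) : R :=
  match i with O => 1 - Series (fun m => Rf (n (S m)) / 2) | S m => Rf (n (S m)) / 2 end.
Definition wf Rf n (j i : nat) : R := if Nat.ltb j (S (n i)) then qf Rf n i else 0.
Definition Tf Rf n (j : nat) : R := Series (wf Rf n j).
Definition pf Rf n (j : nat) : R := Tf Rf n (pred j) - Tf Rf n j.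

Definition good (Rf : nat -> R) (n : nat -> nat) :=
  (forall m, 0 <= Rf m <= 1) /\ n O = 1%nat /\ forall m,
    (n m < n (S m))%nat /\ Rf (n (S m)) <= (1/2)^(S m) / INR (S (n m)).

Lemma n_lt Rf n : good Rf n -> forall a b, (a < b)%nat -> (n a < n b)%nat.
Proof.
  intros [_ [_ H]] a b Hab. induction Hab.
  - apply H.
  - specialize (H m). lia.
Qed.

Lemma n_le Rf n : good Rf n -> forall a b, (a <= b)%nat -> (n a <= n b)%nat.
Proof.
  intros G a b Hab. destruct (Nat.eq_dec a b). subst; lia.
  apply Nat.lt_le_incl. apply (n_lt Rf n G). lia.
Qed.

Lemma n_pos Rf n : good Rf n -> forall a, (1 <= n a)%nat.
Proof.
  intros G a. destruct G as [H1 [H2 H3]] eqn:E. rewrite <- H2. apply (n_le Rf n G). lia.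
Qed.

Lemma qS_bound Rf n : good Rf n -> forall m, 0 <= Rf (n (S m)) / 2 <= (1/2)^(S m) / 2.
Proof.
  intros G m. destruct G as [Hr [_ H]].
  destruct (H m) as [_ Hb]. specialize (Hr (n (S m))).
  assert (1 <= INR (S (n m))) by (apply (le_INR 1); lia).
  assert (0 < (1/2)^(S m)) by (apply pow_lt; lra).
  assert ((1/2)^(S m) / INR (S (n m)) <= (1/2)^(S m)).
  { unfold Rdiv. rewrite <- (Rmult_1_r ((1/2)^(S m))) at 2.
    apply Rmult_le_compat_l. lra. rewrite <- Rinv_1. apply Rinv_le_contravar; lra. }
  lra.
Qed.

Lemma X_bound Rf n : good Rf n -> 0 <= Series (fun m => Rf (n (S m)) / 2) <= 1.
Proof.
  intros G. split.
  - apply Series_nonneg. intros; apply (qS_bound Rf n G).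
    apply (@ex_series_le R_AbsRing R_CompleteNormedModule _ (fun i => (1/2)^i)); [|apply ex_geom1].
    intros i. destruct (qS_bound Rf n G i). simpl in H0.
    change norm with Rabs. rewrite Rabs_pos_eq. 2: lra.
    assert (0 < (1/2)^i) by (apply pow_lt; lra). lra.
  - assert (E : Series (fun m => /2 * (1/2)^m) = 1).
    { rewrite (is_series_unique _ _ (geom_c (/2))). field. }
    rewrite <- E. apply Series_le; [|apply ex_geom_c].
    intros m. destruct (qS_bound Rf n G m). split. lra.
    simpl in H0. lra.
Qed.

Lemma q_bound Rf n : good Rf n -> forall i, 0 <= qf Rf n i <= (1/2)^i.
Proof.
  intros G [|m]; simpl.
  - destruct (X_bound Rf n G). lra.
  - destruct (qS_bound Rf n G m). simpl in H0. lra.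
Qed.

Lemma w_bound Rf n : good Rf n -> forall j i, 0 <= wf Rf n j i <= qf Rf n i.
Proof.
  intros G j i. unfold wf. destruct (q_bound Rf n G i).
  destruct (Nat.ltb j (S (n i))); lra.
Qed.


Lemma ex_w Rf n : good Rf n -> forall j, ex_series (wf Rf n j).
Proof.
  intros G j. apply (@ex_series_le R_AbsRing R_CompleteNormedModule _ (fun i => (1/2)^i)); [|apply ex_geom1].
  intros i. destruct (w_bound Rf n G j i), (q_bound Rf n G i).
  change norm with Rabs. rewrite Rabs_pos_eq; lra.
Qed.

Lemma ex_q Rf n : good Rf n -> ex_series (qf Rf n).
Proof.
  intros G. apply (@ex_series_le R_AbsRing R_CompleteNormedModule _ (fun i => (1/2)^i)); [|apply ex_geom1].
  intros i. destruct (q_bound Rf n G i).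
  change norm with Rabs. rewrite Rabs_pos_eq; lra.
Qed.

Lemma T0 Rf n : good Rf n -> Tf Rf n O = 1.
Proof.
  intros G. unfold Tf. rewrite (Series_ext _ (qf Rf n)).
  2:{ intros i. unfold wf. reflexivity. }
  rewrite Series_incr_1 by apply (ex_q Rf n G). simpl. ring.
Qed.

Lemma T_mono Rf n : good Rf n -> forall j, Tf Rf n (S j) <= Tf Rf n j.
Proof.
  intros G j. unfold Tf. apply Series_le; [|apply (ex_w Rf n G)].
  intros i. destruct (w_bound Rf n G (S j) i) as [H1 H2]. split; auto.
  unfold wf in *. destruct (Nat.ltb (S j) (S (n i))) eqn:E; [|destruct (Nat.ltb j (S (n i))); lra].
  apply Nat.ltb_lt in E. replace (Nat.ltb j (S (n i))) with true; [lra|].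
  symmetry; apply Nat.ltb_lt; lia.
Qed.

Lemma T_bound Rf n : good Rf n -> forall N j, (S (n N) <= j)%nat -> Tf Rf n j <= (2/3)^N * 4.
Proof.
  intros G N j Hj.
  assert (Hs : is_series (fun i => (2/3)^N * (3/4)^i) ((2/3)^N * 4))
    by exact (is_series_scal_l ((2/3)^N) _ 4 geom_34).
  rewrite <- (is_series_unique _ _ Hs). unfold Tf.
  apply Series_le; [| eexists; exact Hs].
  intros i. destruct (w_bound Rf n G j i) as [H1 H2]. split; auto.
  assert (0 < (2/3)^N) by (apply pow_lt; lra).
  assert (0 < (3/4)^i) by (apply pow_lt; lra).
  destruct (Compare_dec.le_lt_dec i N) as [Hi|Hi].
  - unfold wf. replace (Nat.ltb j (S (n i))) with false.
    + apply Rlt_le, Rmult_lt_0_compat; auto.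
    + symmetry. apply Nat.ltb_ge. pose proof (n_le Rf n G i N Hi). lia.
  - destruct (q_bound Rf n G i). eapply Rle_trans; [apply H2|]. eapply Rle_trans; [apply H4|].
    replace (1/2) with (2/3 * (3/4)) by field. rewrite Rpow_mult_distr.
    apply Rmult_le_compat_r. lra.
    replace i with (N + (i - N))%nat by lia. rewrite pow_add.
    rewrite <- (Rmult_1_r ((2/3)^N)) at 2. apply Rmult_le_compat_l. lra.
    rewrite <- (pow1 (i - N)). apply pow_incr. lra.
Qed.

Lemma T_lim Rf n : good Rf n -> is_lim_seq (Tf Rf n) 0.
Proof.
  intros G. apply is_lim_seq_spec. intros eps.
  assert (Hg := is_lim_seq_geom (2/3) ltac:(rewrite Rabs_pos_eq; lra)).
  apply is_lim_seq_spec in Hg.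
  destruct (Hg (mkposreal (eps / 4) ltac:(pose proof (cond_pos eps); simpl; lra))) as [N HN].
  specialize (HN N (le_n N)). simpl in HN.
  exists (S (n N)). intros j Hj.
  pose proof (T_bound Rf n G N j Hj).
  assert (0 <= Tf Rf n j).
  { apply Series_nonneg. intros; apply (w_bound Rf n G). apply (ex_w Rf n G). }
  rewrite Rminus_0_r, Rabs_pos_eq by lra.
  rewrite Rminus_0_r, Rabs_pos_eq in HN by (apply pow_le; lra). lra.
Qed.

Lemma p_k Rf n : good Rf n -> forall i, pf Rf n (S (n i)) = qf Rf n i.
Proof.
  intros G i. unfold pf, Tf. simpl pred.
  rewrite <- Series_minus by apply (ex_w Rf n G).
  set (b := fun i' => if Nat.leb i' i then qf Rf n i else 0).
  rewrite (Series_ext _ (fun i' => b i' - b (S i'))).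
  - assert (Hb : is_lim_seq b 0).
    { apply (is_lim_seq_incr_n _ (S i)). apply is_lim_seq_ext with (fun _ => 0).
      2: apply is_lim_seq_const.
      intros m. unfold b. rewrite (proj2 (Nat.leb_gt _ _)) by lia. reflexivity. }
    rewrite (is_series_unique _ _ (telesc b 0 Hb)).
    unfold b. rewrite (proj2 (Nat.leb_le 0 i)) by lia. ring.
  - intros i'. unfold wf, b.
    destruct (Compare_dec.lt_eq_lt_dec i' i) as [[Hl|He]|Hl].
    + pose proof (n_lt Rf n G _ _ Hl).
      rewrite (proj2 (Nat.ltb_ge _ _)) by lia. rewrite (proj2 (Nat.ltb_ge _ _)) by lia.
      rewrite (proj2 (Nat.leb_le _ _)) by lia. rewrite (proj2 (Nat.leb_le _ _)) by lia. ring.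
    + subst i'.
      rewrite (proj2 (Nat.ltb_lt _ _)) by lia. rewrite (proj2 (Nat.ltb_ge _ _)) by lia.
      rewrite (proj2 (Nat.leb_le _ _)) by lia. rewrite (proj2 (Nat.leb_gt _ _)) by lia. ring.
    + pose proof (n_lt Rf n G _ _ Hl).
      rewrite (proj2 (Nat.ltb_lt _ _)) by lia. rewrite (proj2 (Nat.ltb_lt _ _)) by lia.
      rewrite (proj2 (Nat.leb_gt _ _)) by lia. rewrite (proj2 (Nat.leb_gt _ _)) by lia. ring.
Qed.

Lemma T_tail Rf n : good Rf n -> forall i, Tf Rf n (S (n i)) <= 1 / INR (n i).
Proof.
  intros G i.
  assert (Hni : 1 <= INR (n i)) by (apply (le_INR 1); apply (n_pos Rf n G)).
  assert (E : Series (fun i' => / (2 * INR (n i)) * (1/2)^i') = 1 / INR (n i)).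
  { rewrite (is_series_unique _ _ (geom_c _)). field. lra. }
  rewrite <- E. unfold Tf. apply Series_le; [|apply ex_geom_c].
  intros i'. destruct (w_bound Rf n G (S (n i)) i') as [H1 H2]. split; auto.
  assert (0 < (1/2)^i') by (apply pow_lt; lra).
  assert (0 < / (2 * INR (n i))) by (apply Rinv_0_lt_compat; lra).
  unfold wf in *. destruct (Nat.ltb (S (n i)) (S (n i'))) eqn:Eb.
  2: { apply Rlt_le, Rmult_lt_0_compat; auto. }
  apply Nat.ltb_lt in Eb.
  destruct i' as [|m].
  { pose proof (n_le Rf n G 0 i ltac:(lia)). lia. }
  assert (Hm : (i <= m)%nat).
  { destruct (Compare_dec.le_lt_dec i m); auto. pose proof (n_le Rf n G (S m) i ltac:(lia)). lia. }
  pose proof (n_le Rf n G i m Hm).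
  destruct G as [Hr [_ Hn]]. destruct (Hn m) as [_ Hb]. simpl qf.
  assert (INR (n i) <= INR (S (n m))) by (apply le_INR; lia).
  assert ((1/2)^(S m) / INR (S (n m)) <= (1/2)^(S m) / INR (n i)).
  { unfold Rdiv. apply Rmult_le_compat_l. apply pow_le; lra.
    apply Rinv_le_contravar; lra. }
  assert (Eq : / (2 * INR (n i)) * (1/2)^(S m) = (1/2)^(S m) / INR (n i) / 2) by (field; lra).
  rewrite Eq. lra.
Qed.

Theorem mainTheorem14 (Rf : nat -> R)
  (Hrange : forall n : nat, 0 <= Rf n <= 1)
  (Hlim : is_lim_seq Rf 0) :
  exists (p : nat -> R) (n k : nat -> nat) (C : R),
    (forall j : nat, (1 <= j)%nat -> 0 <= p j) /\
    is_series (fun j : nat => p (S j)) 1 /\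
    (forall i : nat, (1 <= i)%nat -> (0 < n i)%nat /\ (n i < n (S i))%nat) /\
    (forall i : nat, (1 <= i)%nat -> (0 < k i)%nat /\ (k i < k (S i))%nat) /\
    1 / 2 <= C <= 1 /\
    (forall i : nat, (1 < i)%nat ->
       (exists s : R, is_series (fun j : nat => p (S (k i + j))) s
                      /\ s <= 1 / INR (n i)) /\
       INR (n i) * p (k i) <= INR (k i) /\
       p (k i) = C * Rf (n i)).
Proof.
  destruct (build_n Rf Hlim) as [n [Hn0 Hn]].
  assert (G : good Rf n) by (split; [exact Hrange|split; assumption]).
  exists (pf Rf n), n, (fun i => S (n i)), (1/2).
  split; [|split; [|split; [|split; [|split]]]].
  - intros [|j] Hj; [lia|]. unfold pf. simpl pred.
    pose proof (T_mono Rf n G j). lra.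
  - replace 1 with (Tf Rf n O - 0) by (rewrite (T0 Rf n G); ring).
    exact (telesc (Tf Rf n) 0 (T_lim Rf n G)).
  - intros i _. split. pose proof (n_pos Rf n G i); lia. apply Hn.
  - intros i _. split. lia. destruct (Hn i); lia.
  - lra.
  - intros i Hi. rewrite (p_k Rf n G i).
    destruct i as [|m]; [lia|]. simpl qf.
    split; [|split].
    + exists (Tf Rf n (S (n (S m)))). split; [|apply (T_tail Rf n G)].
      set (b := fun j => Tf Rf n (S (n (S m)) + j)).
      assert (Hb : is_lim_seq b 0).
      { apply is_lim_seq_ext with (fun j => Tf Rf n (j + S (n (S m)))).
        intros j; unfold b; f_equal; lia.
        apply (is_lim_seq_incr_n (Tf Rf n) (S (n (S m))) 0). apply (T_lim Rf n G). }
      replace (Tf Rf n (S (n (S m)))) with (b O - 0) by (unfold b; rewrite Nat.add_0_r; ring).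
      apply (is_series_ext (fun j => b j - b (S j))); [|exact (telesc b 0 Hb)].
      intros j. unfold b, pf. simpl pred. f_equal. f_equal. lia.
    + rewrite S_INR. destruct (Hrange (n (S m))).
      assert (0 <= INR (n (S m))) by apply pos_INR. nra.
    + field.
Qed.
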